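(* Let $A\in\mathbb{C}^{n\times m}$, $\alpha_1\ge1/\sqrt n$, $\alpha_2\ge1/\sqrt m$, $U=\{u\in\mathbb{C}^n:\|u\|\le\alpha_1,\operatorname{Re}(u)\ge0,\sum_iu_i=1\}$, $V=\{v\in\mathbb{C}^m:\|v\|\le\alpha_2,\operatorname{Re}(v)\ge0,\sum_iv_i=1\}$. Let $\mu_B\in\mathbb{C}^{1\times n}$, $b\in\mathbb{R}$, $\mu_D\in\mathbb{C}^{1\times m}$, $d\in\mathbb{R}$, and let $(\Gamma_B,J_B)$, $(\Gamma_D,J_D)$ be the covariance and pseudo-covariance matrices of complex random row vectors $B\in\mathbb{C}^{1\times n}$, $D\in\mathbb{C}^{1\times m}$. For $p=(p_1,p_2)$ set $$S_1(p_1)=\Big\{u\in U:\operatorname{Re}(\mu_Bu)+k_{p_1}\sqrt{\tfrac12\big(u^H\Gamma_Bu+\operatorname{Re}(u^TJ_Bu)\big)}\le b\Big\},$$ $$S_2(p_2)=\Big\{v\in V:\operatorname{Re}(\mu_Dv)-k_{p_2}\sqrt{\tfrac12\big(v^H\Gamma_Dv+\operatorname{Re}(v^TJ_Dv)\big)}\ge d\Big\},$$ where for each $j$, $k_{p_j}$ and the range of $p_j$ are given by one of the following cases: (i) CES distribution: $p_j\in[0.5,1)$, $k_{p_j}=\Phi^{-1}(p_j)$; (ii) known first two moments: $p_j\in(0,1)$, $k_{p_j}=\sqrt{p_j/(1-p_j)}$; (iii) unknown second-order moment: $p_j\in(0,1)$, $k_{p_j}=\sqrt{p_j/(1-p_j)}$;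 (iv) unknown moments (proper case): $p_j\in(0,1)$, $k_{p_j}=\sqrt{p_j/(1-p_j)}\sqrt{\zeta_2}+\sqrt{\zeta_1}$ with constants $\zeta_1,\zeta_2\ge0$. Assume there exist $u\in S_1(p_1)$ and $v\in S_2(p_2)$ for which all defining inequality constraints hold strictly. Then the game $G(p)=\max_{u\in S_1(p_1)}\min_{v\in S_2(p_2)}\operatorname{Re}(u^HAv)$ admits a saddle-point equilibrium, i.e. there exists $(u^\star,v^\star)\in S_1(p_1)\times S_2(p_2)$ with $$\operatorname{Re}(u^HAv^\star)\le\operatorname{Re}(u^{\star H}Av^\star)\le\operatorname{Re}(u^{\star H}Av)\qquad\forall(u,v)\in S_1(p_1)\times S_2(p_2).$$
   Context: $\|\cdot\|$ is the Euclidean norm, $^H$ conjugate transpose, $\operatorname{Re}(u)\ge0$ componentwise. The quantities $\tfrac12(u^H\Gamma_Bu+\operatorname{Re}(u^TJ_Bu))$ and $\tfrac12(v^H\Gamma_Dv+\operatorname{Re}(v^TJ_Dv))$ are, by the paper's convention, the variances of $\operatorname{Re}(Bu)$ and $\operatorname{Re}(Dv)$, hence nonnegative (positive semidefinite quadratic forms in $(\operatorname{Re}u,\operatorname{Im}u)$, resp. $(\operatorname{Re}v,\operatorname{Im}v)$). $\Phi^{-1}$ is the inverse cumulative distribution function (quantile function) of the standard complex elliptically symmetric distribution used in the chance-constraint reformulation. A complex elliptically symmetric distribution with mean $\mu$, covariance $\Gamma$, pseudo-covariance $J$ has characteristic function $\exp(i\operatorname{Re}(z^H\mu))\,\psi(z^H\Gamma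 z+\operatorname{Re}(z^HJ\bar z))$ for some generator $\psi$. *)

(* Defs.v *)
From mathcomp Require Import all_boot all_algebra.
From mathcomp Require Import complex.
From mathcomp Require Import all_classical all_reals all_analysis.
Set Implicit Arguments. Unset Strict Implicit. Unset Printing Implicit Defensive.
Import GRing.Theory Num.Theory.
Local Open Scope ring_scope.
Local Open Scope classical_set_scope.

Section ChanceGame.
Variable R : realType.

Definition conjT (r c : nat) (M : 'M[R[i]]_(r, c)) : 'M[R[i]]_(c, r) :=
  (map_mx conjc M)^T.

Definition cnorm (n : nat) (u : 'cV[R[i]]_n) : R :=
  Num.sqrt (\sum_(i < n) ((complex.Re (u i 0)) ^+ 2 + (complex.Im (u i 0)) ^+ 2)).

Definition Uset (n : nat) (alpha : R) : set 'cV[R[i]]_n :=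
  [set u | cnorm u <= alpha /\ (forall i, 0 <= complex.Re (u i 0)) /\
           \sum_(i < n) u i 0 = 1].

(* (1/2)(u^H G u + Re(u^T J u)), the variance of Re(B u) *)
Definition varform (n : nat) (G J : 'M[R[i]]_n) (u : 'cV[R[i]]_n) : R :=
  (complex.Re ((conjT u *m G *m u) 0 0) + complex.Re ((u^T *m J *m u) 0 0)) / 2.

(* (G, J) is a covariance / pseudo-covariance pair of a complex random
   vector: G Hermitian, J symmetric, and every variance form nonnegative
   (this characterizes exactly the realizable pairs). *)
Definition cov_pair (n : nat) (G J : 'M[R[i]]_n) : Prop :=
  conjT G = G /\ J^T = J /\ (forall u, 0 <= varform G J u).

Definition rot (t : R) (z : R * R) : R * R :=
  (cos t * z.1 - sin t * z.2, sin t * z.1 + cos t * z.2).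

(* a standard (zero mean, identity scatter, zero pseudo-scatter) scalar CES
   distribution: a probability on C = R x R whose characteristic function is
   radial, i.e. which is rotation invariant *)
Definition std_CES (P : probability (R * R)%type R) : Prop :=
  forall (t : R) (A : set (R * R)), measurable A -> P (rot t @^-1` A) = P A.

(* cumulative distribution function Phi of the standard CES variable (its
   real part) and its quantile function Phi^{-1} *)
Definition ces_cdf (P : probability (R * R)%type R) (x : R) : R :=
  fine (P [set z : R * R | z.1 <= x]).

Definition ces_quantile (P : probability (R * R)%type R) (p : R) : R :=
  inf [set x : R | p <= ces_cdf P x].

Inductive k_case (p k : R) : Prop :=
  | k_CES (P : probability (R * R)%type R) :
      std_CES P -> 2^-1 <= p < 1 -> k = ces_quantile P p -> k_case p k
  | k_known_moments :
      0 < p < 1 -> k = Num.sqrt (p / (1 - p)) -> k_case p k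
  | k_unknown_second_moment :
      0 < p < 1 -> k = Num.sqrt (p / (1 - p)) -> k_case p k
  | k_unknown_moments (zeta1 zeta2 : R) :
      0 <= zeta1 -> 0 <= zeta2 -> 0 < p < 1 ->
      k = Num.sqrt (p / (1 - p)) * Num.sqrt zeta2 + Num.sqrt zeta1 ->
      k_case p k.

Definition S1 (n : nat) (alpha1 : R) (muB : 'rV[R[i]]_n) (GB JB : 'M[R[i]]_n)
  (b k1 : R) : set 'cV[R[i]]_n :=
  [set u | Uset alpha1 u /\
           complex.Re ((muB *m u) 0 0) + k1 * Num.sqrt (varform GB JB u) <= b].

Definition S2 (m : nat) (alpha2 : R) (muD : 'rV[R[i]]_m) (GD JD : 'M[R[i]]_m)
  (d k2 : R) : set 'cV[R[i]]_m :=
  [set v | Uset alpha2 v /\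
           complex.Re ((muD *m v) 0 0) - k2 * Num.sqrt (varform GD JD v) >= d].

Definition S1_strict (n : nat) (alpha1 : R) (muB : 'rV[R[i]]_n)
  (GB JB : 'M[R[i]]_n) (b k1 : R) (u : 'cV[R[i]]_n) : Prop :=
  [/\ cnorm u < alpha1, (forall i, 0 < complex.Re (u i 0)), \sum_(i < n) u i 0 = 1 &
      complex.Re ((muB *m u) 0 0) + k1 * Num.sqrt (varform GB JB u) < b].

Definition S2_strict (m : nat) (alpha2 : R) (muD : 'rV[R[i]]_m)
  (GD JD : 'M[R[i]]_m) (d k2 : R) (v : 'cV[R[i]]_m) : Prop :=
  [/\ cnorm v < alpha2, (forall i, 0 < complex.Re (v i 0)), \sum_(i < m) v i 0 = 1 &
      complex.Re ((muD *m v) 0 0) - k2 * Num.sqrt (varform GD JD v) > d].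

Definition payoff (n m : nat) (A : 'M[R[i]]_(n, m)) (u : 'cV[R[i]]_n)
  (v : 'cV[R[i]]_m) : R :=
  complex.Re ((conjT u *m A *m v) 0 0).

End ChanceGame.

(* Main.v *)
Require Import Defs.
From mathcomp Require Import all_boot all_order all_algebra.
From mathcomp Require Import complex finmap.
From mathcomp Require Import all_classical all_reals all_analysis.
From mathcomp Require Import ring lra.
Set Implicit Arguments. Unset Strict Implicit. Unset Printing Implicit Defensive.
Import Order.TTheory GRing.Theory Num.Theory numFieldNormedType.Exports.
Local Open Scope ring_scope.
Local Open Scope classical_set_scope.

Lemma claim1_real (R : realFieldType) (A0 A1 B0 B1 t : R) : 0 <= t <= 1 ->
  0 < A0 -> 0 < B1 -> A1 <= 0 -> B0 <= 0 ->
  exists m, 0 <= m <= 1 /\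
   ((0 < (1-m)*A0 + m*A1 /\ 0 < (1-m)*B0 + m*B1) \/
    (1-t)*((1-m)*A0 + m*A1) + t*((1-m)*B0+m*B1) <= 0).
Proof.
move=> /andP[t0 t1] a0 b1 a1 b0.
have ha : 0 < A0 - A1 by lra.
have hb : 0 < B1 - B0 by lra.
pose sA := A0/(A0-A1); pose sB := -B0/(B1-B0); pose D := (sA - sB)/2.
have ha' : A0 - A1 != 0 by rewrite gt_eqF.
have hb' : B1 - B0 != 0 by rewrite gt_eqF.
have sA0 : 0 <= sA by rewrite /sA; apply: divr_ge0; lra.
have sA1 : sA <= 1 by rewrite /sA ler_pdivrMr // mul1r; lra.
have sB0 : 0 <= sB by rewrite /sB; apply: divr_ge0; lra.
have sB1 : sB <= 1 by rewrite /sB ler_pdivrMr // mul1r; lra.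
exists ((sA+sB)/2); split; first by apply/andP; split; lra.
have e1 : (1-(sA+sB)/2)*A0 + (sA+sB)/2*A1 = (A0-A1)*D.
  rewrite /D /sA /sB; field; rewrite ?ha' ?hb' ?pnatr_eq0 //=. 
have e2 : (1-(sA+sB)/2)*B0 + (sA+sB)/2*B1 = (B1-B0)*D.
  rewrite /D /sA /sB; field; rewrite ?ha' ?hb' ?pnatr_eq0 //=. 
rewrite e1 e2.
have [Dp|Dn] := ltP 0 D.
  by left; split; apply: mulr_gt0.
right. have -> : (1 - t) * ((A0 - A1) * D) + t * ((B1 - B0) * D) =
  D * ((1 - t) * (A0 - A1) + t * (B1 - B0)) by ring.
apply: mulr_le0_ge0 => //.
apply: addr_ge0; apply: mulr_ge0; lra.
Qed.

Lemma openness (R : realFieldType) (a b al t : R) : al < (1-t)*a + t*b ->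
  exists2 d, 0 < d & forall t', `|t' - t| < d -> al < (1-t')*a + t'*b.
Proof.
move=> h; set g := (1-t)*a + t*b - al.
have g0 : 0 < g by rewrite /g; lra.
have n0 : 0 < `|a - b| + 1 by rewrite ltr_wpDl.
exists (g / (`|a - b| + 1)); first exact: divr_gt0.
move=> t' ht'.
have : (t' - t) * (a - b) < g.
  apply: le_lt_trans (ler_norm _) _; rewrite normrM.
  apply: (@le_lt_trans _ _ (`|t' - t| * (`|a - b| + 1))).
    by apply: ler_wpM2l => //; rewrite lerDl.
  by rewrite -ltr_pdivlMr.
rewrite /g => hh.
have -> : (1 - t') * a + t' * b = (1 - t) * a + t * b - (t' - t) * (a - b) by ring.
lra.
Qed.

Section StepA.
Variable R : realType.
Variables (T1 T2 : Type) (c1 : R -> T1 -> T1 -> T1) (c2 : R -> T2 -> T2 -> T2).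
Variable f : T1 -> T2 -> R.
Hypothesis f_aff1 : forall t x x' y, f (c1 t x x') y = (1 - t) * f x y + t * f x' y.
Hypothesis f_aff2 : forall t x y y', f x (c2 t y y') = (1 - t) * f x y + t * f x y'.

Definition cvx1 (X : set T1) :=
  forall t x x', 0 <= t <= 1 -> X x -> X x' -> X (c1 t x x').

Lemma comb_pos (m P P' : R) : 0 <= m <= 1 -> 0 < P -> 0 < P' -> 0 < (1-m)*P + m*P'.
Proof.
move=> /andP[m0 m1] p p'.
have [->|mlt] := eqVneq m 1; first by rewrite subrr mul0r add0r mul1r.
have m1' : m < 1 by rewrite lt_neqAle mlt m1.
apply: lt_le_trans (_ : (1-m)*P <= _); first by apply: mulr_gt0 => //; lra.
by rewrite lerDl; apply: mulr_ge0 => //; apply: ltW.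
Qed.

Lemma comb_le (t a b al : R) : 0 <= t <= 1 -> a <= al -> b <= al ->
  (1-t)*a + t*b <= al.
Proof.
move=> /andP[t0 t1] ha hb.
have h1 : (1-t)*a <= (1-t)*al by apply: ler_wpM2l => //; lra.
have h2 : t*b <= t*al by apply: ler_wpM2l.
have -> : al = (1-t)*al + t*al by ring.
by apply: lerD.
Qed.

Lemma stepA (X : set T1) (al : R) y1 y2 : cvx1 X ->
  (forall t, 0 <= t <= 1 -> exists2 x, X x & al < f x (c2 t y1 y2)) ->
  exists2 x, X x & al < f x y1 /\ al < f x y2.
Proof.
move=> cX cov; apply: contrapT => nex.
have H : forall x, X x -> f x y1 <= al \/ f x y2 <= al.
  move=> x Xx; case: (lerP (f x y1) al) => h1; first by left.
  case: (lerP (f x y2) al) => h2; first by right.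
  by exfalso; apply: nex; exists x.
pose a x := f x y1; pose b x := f x y2.
have cov' : forall t, 0 <= t <= 1 -> exists2 x, X x & al < (1-t)*a x + t*b x.
  by move=> t /cov[x Xx]; rewrite f_aff2 => h; exists x.
pose TA t := exists x, [/\ X x, al < (1-t)*a x + t*b x & al < a x].
pose TB t := exists x, [/\ X x, al < (1-t)*a x + t*b x & al < b x].
have disj : forall t, 0 <= t <= 1 -> TA t -> TB t -> False.
  move=> t t01 [x [Xx hx ax]] [x' [Xx' hx' bx']].
  have bx : b x <= al by case: (H x Xx) => // h; rewrite /a in ax; lra.
  have ax' : a x' <= al by case: (H x' Xx') => // h; rewrite /b in bx'; lra.
  have [m [m01 [[h1 h2]|h]]] := @claim1_real _ (a x - al) (a x' - al)
       (b x - al) (b x' - al) t t01 ltac:(lra) ltac:(lra) ltac:(lra) ltac:(lra).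
  - case: (H (c1 m x x') (cX _ _ _ m01 Xx Xx')); rewrite f_aff1 => hh.
      by rewrite /a in h1; lra.
    by rewrite /b in h2; lra.
  - set P := (1-t)*(a x - al) + t*(b x - al).
    set P' := (1-t)*(a x' - al) + t*(b x' - al).
    have hP : 0 < P by rewrite /P; lra.
    have hP' : 0 < P' by rewrite /P'; lra.
    have := @comb_pos m P P' m01 hP hP'.
    have -> : (1 - m) * P + m * P' = (1 - t) * ((1 - m) * (a x - al) + m * (a x' - al)) +
       t * ((1 - m) * (b x - al) + m * (b x' - al)) by rewrite /P /P'; ring.
    lra.
have cover : forall t, 0 <= t <= 1 -> TA t \/ TB t.
  move=> t t01; have [x Xx hx] := cov' t t01.
  case: (ltrP al (a x)) => ha; first by left; exists x.
  case: (ltrP al (b x)) => hb; first by right; exists x.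
  by have := @comb_le t _ _ al t01 ha hb; lra.
have TA0 : TA 0.
  have [x Xx hx] := cov' 0 ltac:(lra); exists x; split => //; lra.
have TB1 : TB 1.
  have [x Xx hx] := cov' 1 ltac:(lra); exists x; split => //; lra.
pose E := [set t | (0 <= t <= 1) /\ TB t].
have E1 : E 1 by split => //; lra.
have lbE : lbound E 0 by move=> t [/andP[]].
have hlE : has_lbound E by exists 0.
have hiE : has_inf E by split => //; exists 1.
set s := inf E.
have s0 : 0 <= s by apply: lb_le_inf => //; exists 1.
have s1 : s <= 1 by apply: ge_inf.
have s01 : 0 <= s <= 1 by lra.
case: (cover s s01) => [[x [Xx hx ax]]|[x [Xx hx bx]]].
- have [d d0 hd] := @openness _ _ _ _ _ hx.
  have [e Ee es] := inf_adherent d0 hiE.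
  have se : s <= e by apply: ge_inf.
  case: (Ee) => e01 TBe.
  apply: (disj e e01) => //; exists x; split => //.
  by apply: hd; rewrite ger0_norm; lra.
- have [d d0 hd] := @openness _ _ _ _ _ hx.
  have sp : 0 < s.
    have [s00|//] : s = 0 \/ 0 < s by lra.
    exfalso; apply: (disj 0 ltac:(lra) TA0); exists x; split => //; rewrite -s00 //.
  pose mi := Num.min s d.
  have mi1 : mi <= s by rewrite /mi ge_min lexx.
  have mi2 : mi <= d by rewrite /mi ge_min lexx orbT.
  have mi0 : 0 < mi by rewrite /mi lt_min sp d0.
  have : E (s - mi / 2).
    split; first lra.
    exists x; split => //; apply: hd; rewrite ler0_norm; lra.
  move/ge_inf => /(_ hlE); rewrite -/s; lra.
Qed.
End StepA.

Lemma inP_seq (T : eqType) (s : seq T) x : x \in s -> List.In x s.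
Proof.
elim: s => //= y s IH; rewrite inE => /orP[/eqP ->|h]; [by left|by right; apply: IH].
Qed.

Lemma lim_eps (R : realType) (a b : R) :
  (forall k : nat, a <= b + (k.+1%:R)^-1) -> a <= b.
Proof.
move=> h; apply/ler_addgt0Pr => e e0.
have := truncnS_gt e^-1; set N := Num.truncn e^-1 => hN.
have h2 : (N.+1%:R)^-1 < e.
  by rewrite -[e]invrK ltf_pV2 ?posrE ?invr_gt0 ?ltr0Sn.
by apply: le_trans (h N) _; rewrite lerD2l ltW.
Qed.

Section StepB.
Variable R : realType.
Variables (T1 T2 : Type) (c1 : R -> T1 -> T1 -> T1) (c2 : R -> T2 -> T2 -> T2).
Variable f : T1 -> T2 -> R.
Hypothesis f_aff1 : forall t x x' y, f (c1 t x x') y = (1 - t) * f x y + t * f x' y.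
Hypothesis f_aff2 : forall t x y y', f x (c2 t y y') = (1 - t) * f x y + t * f x y'.

Lemma stepB (Y : set T2) (al : R) (y0 : T2) : Y y0 -> cvx1 c2 Y ->
  forall ys : seq T2, forall X : set T1, cvx1 c1 X ->
  (forall y, Y y -> exists2 x, X x & al < f x y) ->
  (forall y, List.In y ys -> Y y) ->
  exists2 x, X x & forall y, List.In y ys -> al < f x y.
Proof.
move=> Y0 cY ys; elim: ys => [|y ys IH] X cX hX hys.
  by have [x Xx _] := hX y0 Y0; exists x.
pose X' := [set x | X x /\ al < f x y].
have cX' : cvx1 c1 X'.
  move=> t x x' t01 [Xx hx] [Xx' hx']; split; first exact: cX.
  rewrite f_aff1.
  have := @comb_pos R t (f x y - al) (f x' y - al) t01 ltac:(lra) ltac:(lra).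
  lra.
case: (pselect (forall y', Y y' -> exists2 x, X' x & al < f x y')) => [h|h].
  have [x [Xx hx] hall] := IH X' cX' h (fun y' hy' => hys y' (or_intror hy')).
  by exists x => // y' [<-|/hall].
exfalso; apply: h => y' Yy'; apply: contrapT => hn.
have Hx : forall x, X x -> f x y' <= al \/ f x y <= al.
  move=> x Xx; case: (lerP (f x y) al) => hy; first by right.
  left; rewrite leNgt; apply/negP => hlt; apply: hn; exists x => //.
have Yy : Y y by apply: hys; left.
have [x Xx [h1 h2]] := @stepA R T1 T2 c1 c2 f f_aff1 f_aff2 X al y' y cX
   (fun t t01 => hX _ (cY t y' y t01 Yy' Yy)).
by case: (Hx x Xx); lra.
Qed.
End StepB.

Lemma inP_seq' (T : eqType) (s : seq T) x : List.In x s -> x \in s.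
Proof.
elim: s => //= y s IH [->|h]; rewrite inE; [by rewrite eqxx|by rewrite IH ?orbT].
Qed.

Section StepC.
Variable R : realType.
Variables (T1 T2 : ptopologicalType) (c1 : R -> T1 -> T1 -> T1) (c2 : R -> T2 -> T2 -> T2).
Variable f : T1 -> T2 -> R.
Hypothesis f_aff1 : forall t x x' y, f (c1 t x x') y = (1 - t) * f x y + t * f x' y.
Hypothesis f_aff2 : forall t x y y', f x (c2 t y y') = (1 - t) * f x y + t * f x y'.

Lemma stepC (X : set T1) (Y : set T2) (al : R) (y0 : T2) : Y y0 ->
  compact X -> cvx1 c1 X -> cvx1 c2 Y ->
  (forall y r, closed [set x | r <= f x y]) ->
  (forall y, Y y -> exists2 x, X x & al < f x y) ->
  exists2 x, X x & forall y, Y y -> al <= f x y.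
Proof.
move=> Y0 cptX cX cY clf hX.
rewrite compact_In0 in cptX.
have [|D' sD'|x hx] := cptX T2 Y (fun y => X `&` [set x | al <= f x y]).
- by exists (fun y => [set x | al <= f x y]).
- have hys : forall y, List.In y (enum_fset D') -> Y y.
    by move=> y /inP_seq' /sD'; rewrite in_setE.
  have [x Xx hx] := @stepB R T1 T2 c1 c2 f f_aff1 f_aff2 Y al y0 Y0 cY
     (enum_fset D') X cX hX hys.
  exists x => y /= yD; split => //; apply/ltW/hx.
  by apply: inP_seq.
- exists x; first by have [] := hx y0 Y0.
  by move=> y Yy; have [] := hx y Yy.
Qed.
End StepC.

Lemma bound_above (R : realType) (T : ptopologicalType) (K : set T) (g : T -> R) :
  compact K -> (forall r, closed [set z | r <= g z]) ->
  exists M, forall z, K z -> g z <= M.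
Proof.
move=> cK clg; apply: contrapT => nb.
rewrite compact_In0 in cK.
have [|D' sD'|z hz] := cK nat setT (fun k => K `&` [set z | k%:R <= g z]).
- by exists (fun k => [set z | k%:R <= g z]).
- pose N := (\max_(k <- enum_fset D') k)%N.
  have [z [Kz hz]] : exists z, K z /\ N%:R < g z.
    apply: contrapT => hn; apply: nb; exists N%:R => z Kz.
    rewrite leNgt; apply/negP => hlt; apply: hn; by exists z.
  exists z => k /= kD; split => //.
  apply: le_trans (ltW hz); rewrite ler_nat.
  by apply: (@leq_bigmax_seq _ _ xpredT id).
- have [Kz hzk] := hz (Num.truncn (g z)).+1 I.
  by have := truncnS_gt (g z); rewrite ltNge hzk.
Qed.

Section Saddle.
Variable R : realType.
Variables (T1 T2 : ptopologicalType) (c1 : R -> T1 -> T1 -> T1) (c2 : R -> T2 -> T2 -> T2).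
Variable f : T1 -> T2 -> R.
Hypothesis f_aff1 : forall t x x' y, f (c1 t x x') y = (1 - t) * f x y + t * f x' y.
Hypothesis f_aff2 : forall t x y y', f x (c2 t y y') = (1 - t) * f x y + t * f x y'.

Theorem saddle (X : set T1) (Y : set T2) x0 y0 : X x0 -> Y y0 ->
  compact X -> compact Y -> cvx1 c1 X -> cvx1 c2 Y ->
  (forall y r, closed [set x | r <= f x y]) ->
  (forall x r, closed [set y | f x y <= r]) ->
  exists x y, [/\ X x, Y y & forall x' y', X x' -> Y y' ->
     f x' y <= f x y <= f x y'].
Proof.
move=> X0 Y0 cptX cptY cX cY clx cly.
have [M hM] := bound_above cptX (g := f^~ y0) (fun r => clx y0 r).
have cly' : forall x r, closed [set y | r <= - f x y].
  move=> x r; have -> : [set y | r <= - f x y] = [set y | f x y <= - r].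
    by apply/seteqP; split => y /=; lra.
  exact: cly.
have [M' hM'] := bound_above cptY (g := fun y => - f x0 y) (cly' x0).
pose S := [set a | exists2 x, X x & forall y, Y y -> a <= f x y].
have S0 : S (- M') by exists x0 => // y Yy; have := hM' y Yy; lra.
have ubS : ubound S M by move=> a [x Xx hx]; apply: le_trans (hx y0 Y0) (hM x Xx).
have hsS : has_sup S by split; [exists (-M') | exists M].
set c := sup S.
have [xs Xxs hxs] : exists2 x, X x & forall y, Y y -> c <= f x y.
  have cptX' := cptX; rewrite compact_In0 in cptX'.
  have [|D' sD'|x hx] := cptX' (T2 * nat)%type [set p | Y p.1]
     (fun p => X `&` [set x | c - (p.2.+1%:R)^-1 <= f x p.1]).
  - by exists (fun p => [set x | c - (p.2.+1%:R)^-1 <= f x p.1]) => // p _; exact: clx.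
  - pose N := (\max_(p <- enum_fset D') p.2)%N.
    have e0 : 0 < (N.+1%:R)^-1 :> R by rewrite invr_gt0 ltr0Sn.
    have [a [x Xx hx] ha] := sup_adherent e0 hsS.
    exists x => p /= pD; split => //.
    have hp : (p.2 <= N)%N by apply: (@leq_bigmax_seq _ _ xpredT (fun p => p.2)).
    have : (N.+1%:R)^-1 <= (p.2.+1%:R)^-1 :> R.
      by rewrite lef_pV2 ?posrE ?ltr0Sn // ler_nat ltnS.
    have := sD' p pD; rewrite in_setE => /hx.
    rewrite -/c in ha => h1 h2.
    have h3 : c - p.2.+1%:R^-1 <= c - N.+1%:R^-1 by rewrite lerD2l lerN2.
    exact: le_trans h3 (le_trans (ltW ha) h1).
  - exists x; first by have [] := hx (y0, 0%N) Y0.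
    move=> y Yy; apply: lim_eps => k; have [_ h] := hx (y, k) Yy.
    by simpl in h; rewrite -lerBlDr.
have hk : forall k : nat, exists2 y, Y y & forall x, X x -> f x y <= c + (k.+1%:R)^-1.
  move=> k; set be := c + (k.+1%:R)^-1.
  have hb : forall x, X x -> exists2 y, Y y & - be < - f x y.
    move=> x Xx; apply: contrapT => hn.
    have : S be.
      exists x => // y Yy; rewrite leNgt; apply/negP => hlt; apply: hn.
      by exists y => //; lra.
    move/(sup_upper_bound hsS) => hbc.
    have hk0 : 0 < (k.+1%:R)^-1 :> R by rewrite invr_gt0 ltr0Sn.
    move: hbc hk0; rewrite /be -/c; move: (k.+1%:R^-1 : R) => u; lra.
  have aff1' : forall t y y' x, - f x (c2 t y y') = (1-t) * (- f x y) + t * (- f x y').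
    by move=> t y y' x; rewrite f_aff2; ring.
  have aff2' : forall t y x x', - f (c1 t x x') y = (1-t) * (- f x y) + t * (- f x' y).
    by move=> t y x x'; rewrite f_aff1; ring.
  have [y Yy hy] := @stepC R T2 T1 c2 c1 (fun y x => - f x y) aff1' aff2' Y X (- be) x0
     X0 cptY cY cX cly' hb.
  by exists y => // x Xx; have := hy x Xx; lra.
have [ys Yys hys] : exists2 y, Y y & forall x, X x -> f x y <= c.
  have cptY' := cptY; rewrite compact_In0 in cptY'.
  have [|D' sD'|y hy] := cptY' (T1 * nat)%type [set p | X p.1]
     (fun p => Y `&` [set y | f p.1 y <= c + (p.2.+1%:R)^-1]).
  - by exists (fun p => [set y | f p.1 y <= c + (p.2.+1%:R)^-1]) => // p _; exact: cly.
  - pose N := (\max_(p <- enum_fset D') p.2)%N.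
    have [y Yy hy] := hk N.
    exists y => p /= pD; split => //.
    have hp : (p.2 <= N)%N by apply: (@leq_bigmax_seq _ _ xpredT (fun p => p.2)).
    have : (N.+1%:R)^-1 <= (p.2.+1%:R)^-1 :> R.
      by rewrite lef_pV2 ?posrE ?ltr0Sn // ler_nat ltnS.
    have := sD' p pD; rewrite in_setE => /hy.
    by move=> h1 h2; apply: le_trans h1 _; rewrite lerD2l.
  - exists y; first by have [] := hy (x0, 0%N) X0.
    move=> x Xx; apply: lim_eps => k; have [_ h] := hy (x, k) Xx.
    by simpl in h.
exists xs, ys; split => // x y Xx Yy.
have h1 := hys x Xx; have h2 := hxs y Yy; have h3 := hys xs Xxs; have h4 := hxs ys Yys.
apply/andP; split; lra.
Qed.
End Saddle.

Section Sc_T6.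
Local Open Scope complex_scope.
Section C.
Variable R : realType.
Lemma ReM (x y : R[i]) : complex.Re (x * y) = complex.Re x * complex.Re y - complex.Im x * complex.Im y.
Proof. by case: x => a b; case: y => c d. Qed.
Lemma ImM (x y : R[i]) : complex.Im (x * y) = complex.Re x * complex.Im y + complex.Im x * complex.Re y.
Proof. by case: x => a b; case: y => c d /=; ring. Qed.
Lemma ReD (x y : R[i]) : complex.Re (x + y) = complex.Re x + complex.Re y.
Proof. by case: x => a b; case: y => c d. Qed.
Lemma ImD (x y : R[i]) : complex.Im (x + y) = complex.Im x + complex.Im y.
Proof. by case: x => a b; case: y => c d. Qed.
Lemma ReC (r : R) : complex.Re (r%:C) = r. Proof. by []. Qed.
Lemma ReJ (x : R[i]) : complex.Re (conjc x) = complex.Re x. Proof. by case: x. Qed.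
Lemma ImJ (x : R[i]) : complex.Im (conjc x) = - complex.Im x. Proof. by case: x. Qed.
Lemma Re_sum I (r : seq I) (P : pred I) (F : I -> R[i]) :
  complex.Re (\sum_(i <- r | P i) F i) = \sum_(i <- r | P i) complex.Re (F i).
Proof. by elim/big_rec2: _ => // i y1 y2 _ <-; rewrite ReD. Qed.
Lemma Im_sum I (r : seq I) (P : pred I) (F : I -> R[i]) :
  complex.Im (\sum_(i <- r | P i) F i) = \sum_(i <- r | P i) complex.Im (F i).
Proof. by elim/big_rec2: _ => // i y1 y2 _ <-; rewrite ImD. Qed.
Lemma ReCM (a : R) (x : R[i]) : complex.Re (a%:C * x) = a * complex.Re x.
Proof. by rewrite ReM /=; case: x => ? ? /=; ring. Qed.
Lemma conjCM (a : R) (x : R[i]) : conjc (a%:C * x) = a%:C * conjc x.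
Proof. by case: x => b c; rewrite /= ; congr Complex; ring. Qed.
End C.

End Sc_T6.

Section RealSide.
Variable R : realType.

Definition rlin k (g : 'rV[R]_k -> R) :=
  forall a b x y, g (a *: x + b *: y) = a * g x + b * g y.

Lemma rlin_sum k (g : 'rV[R]_k -> R) I (r : seq I) (P : pred I) (F : I -> 'rV[R]_k) :
  rlin g -> g (\sum_(i <- r | P i) F i) = \sum_(i <- r | P i) g (F i).
Proof.
move=> hg.
have g0 : g 0 = 0 by have := hg 0 0 0 0; rewrite !scale0r addr0 !mul0r addr0.
elim/big_rec2: _ => // i y1 y2 _ <-.
by have := hg 1 1 (F i) y2; rewrite !scale1r !mul1r.
Qed.

Lemma lin_expand k (g : 'rV[R]_k -> R) x : rlin g ->
  g x = \sum_(j < k) x ord0 j * g (delta_mx ord0 j).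
Proof.
move=> hg; rewrite {1}(row_sum_delta x) rlin_sum //.
apply: eq_bigr => j _.
by have := hg (x ord0 j) 0 (delta_mx ord0 j) 0; rewrite scale0r addr0 mul0r addr0.
Qed.

Lemma sum_cont (T : topologicalType) k (F : 'I_k -> T -> R) :
  (forall j, continuous (F j)) -> continuous (fun x => \sum_(j < k) F j x).
Proof.
elim: k F => [|k IH] F hF.
  have -> : (fun x => \sum_(j < 0) F j x) = (fun=> 0).
    by apply/funext => x; rewrite big_ord0.
  exact: cst_continuous.
have -> : (fun x => \sum_(j < k.+1) F j x) =
   (fun x => \sum_(j < k) F (widen_ord (leqnSn k) j) x + F ord_max x).
  by apply/funext => x; rewrite big_ord_recr.
move=> x; apply: continuousD; last exact: hF.
by apply: IH => j; exact: hF.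
Qed.

Lemma lin_cont k (g : 'rV[R]_k -> R) : rlin g -> continuous g.
Proof.
move=> hg.
have -> : g = (fun x => \sum_(j < k) x ord0 j * g (delta_mx ord0 j)).
  by apply/funext => x; exact: lin_expand.
apply: sum_cont => j x; apply: continuousM; first exact: coord_continuous.
exact: cst_continuous.
Qed.

Definition rbil k (B : 'rV[R]_k -> 'rV[R]_k -> R) :=
  (forall y, rlin (B^~ y)) /\ (forall x, rlin (B x)).

Lemma quad_cont k (B : 'rV[R]_k -> 'rV[R]_k -> R) : rbil B ->
  continuous (fun x => B x x).
Proof.
move=> [h1 h2].
have -> : (fun x => B x x) = (fun x => \sum_(j < k) x ord0 j * B (delta_mx ord0 j) x).
  by apply/funext => x; exact: (lin_expand x (h1 x)).
apply: sum_cont => j x; apply: continuousM; first exact: coord_continuous.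
exact: lin_cont.
Qed.

Lemma quad_expand k (B : 'rV[R]_k -> 'rV[R]_k -> R) a b x y : rbil B ->
  B (a *: x + b *: y) (a *: x + b *: y) =
  a ^+ 2 * B x x + a * b * (B x y + B y x) + b ^+ 2 * B y y.
Proof. by move=> [h1 h2]; rewrite h1 !h2; ring. Qed.

Lemma cs_aux (Qx Qy S : R) : 0 <= Qx -> 0 <= Qy ->
  (forall s, 0 <= Qx + s * S + s ^+ 2 * Qy) -> S ^+ 2 <= 4 * Qx * Qy.
Proof.
move=> hx hy h.
have [Qy0|Qyp] : Qy = 0 \/ 0 < Qy by lra.
  rewrite Qy0 mulr0.
  have [S0|Sn0] := eqVneq S 0; first by rewrite S0 expr0n.
  have := h (- (Qx + 1) / S); rewrite Qy0 mulr0 addr0 divfK //.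
  lra.
have := h (- S / (2 * Qy)).
have e : Qx + - S / (2 * Qy) * S + (- S / (2 * Qy)) ^+ 2 * Qy =
   Qx - S ^+ 2 / (4 * Qy).
  by field; rewrite gt_eqF.
rewrite e subr_ge0 ler_pdivrMr ?mulr_gt0 //; lra.
Qed.

Lemma sqrt_quad_convex k (B : 'rV[R]_k -> 'rV[R]_k -> R) t x y : rbil B ->
  (forall z, 0 <= B z z) -> 0 <= t <= 1 ->
  Num.sqrt (B ((1 - t) *: x + t *: y) ((1 - t) *: x + t *: y)) <=
  (1 - t) * Num.sqrt (B x x) + t * Num.sqrt (B y y).
Proof.
move=> hB hpos /andP[t0 t1].
rewrite quad_expand //.
set Qx := B x x; set Qy := B y y; set S := B x y + B y x.
have hx : 0 <= Qx by exact: hpos.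
have hy : 0 <= Qy by exact: hpos.
have cs : S ^+ 2 <= 4 * Qx * Qy.
  apply: cs_aux => // s.
  have := hpos (1 *: x + s *: y); rewrite quad_expand // expr1n !mul1r.
  by rewrite /Qx /Qy /S.
set p := Num.sqrt Qx; set q := Num.sqrt Qy.
have p0 : 0 <= p by exact: sqrtr_ge0.
have q0 : 0 <= q by exact: sqrtr_ge0.
have pp : p ^+ 2 = Qx by rewrite sqr_sqrtr.
have qq : q ^+ 2 = Qy by rewrite sqr_sqrtr.
have Sle : S <= 2 * p * q.
  rewrite -pp -qq in cs; rewrite leNgt; apply/negP => hlt.
  have h1 : 0 < (S - 2 * p * q) * (S + 2 * p * q).
    by apply: mulr_gt0; [lra | have := mulr_ge0 p0 q0; lra].
  have e : (S - 2 * p * q) * (S + 2 * p * q) = S ^+ 2 - 4 * p ^+ 2 * q ^+ 2 by ring.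
  lra.
have rhs0 : 0 <= (1 - t) * p + t * q by apply: addr_ge0; apply: mulr_ge0 => //; lra.
rewrite -(ger0_norm rhs0) -sqrtr_sqr ler_sqrt; last exact: sqr_ge0.
rewrite -pp -qq.
have : (1 - t) * t * S <= (1 - t) * t * (2 * p * q).
  by apply: ler_wpM2l => //; apply: mulr_ge0; lra.
move=> h; nra.
Qed.

Lemma closed_geF (T : topologicalType) (g : T -> R) r : continuous g ->
  closed [set x | r <= g x].
Proof. by move=> hg; exact: (@preimage_closed _ _ g _ (fun x _ => hg x) (@closed_ge R r)). Qed.

Lemma closed_leF (T : topologicalType) (g : T -> R) r : continuous g ->
  closed [set x | g x <= r].
Proof. by move=> hg; exact: (@preimage_closed _ _ g _ (fun x _ => hg x) (@closed_le R r)). Qed.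

Lemma closed_eqF (T : topologicalType) (g : T -> R) r : continuous g ->
  closed [set x | g x = r].
Proof. by move=> hg; exact: (@preimage_closed _ _ g _ (fun x _ => hg x) (@closed_eq R r)). Qed.

End RealSide.

Section ContHelpers.
Variable R : realType.
Lemma contD (T : topologicalType) (f g : T -> R) :
  continuous f -> continuous g -> continuous (fun x => f x + g x).
Proof. by move=> hf hg x; exact: (continuousD (hf x) (hg x)). Qed.
Lemma contM (T : topologicalType) (f g : T -> R) :
  continuous f -> continuous g -> continuous (fun x => f x * g x).
Proof. by move=> hf hg x; exact: (continuousM (hf x) (hg x)). Qed.
Lemma contC (T : topologicalType) (c : R) : continuous (fun _ : T => c).
Proof. exact: cst_continuous. Qed.
End ContHelpers.

Lemma itv_norm (R : realType) (al x : R) : `|x| <= al -> `[(- al), al]%classic x.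
Proof. by move=> h /=; rewrite in_itv /= -ler_norml. Qed.

Section Sc_T8.
Local Open Scope complex_scope.

Section Concrete.
Variable R : realType.

Definition emb n (x : 'rV[R]_(n + n)) : 'cV[R[i]]_n :=
  \col_i (x ord0 (lshift n i) +i* x ord0 (rshift n i)).
Definition unemb n (u : 'cV[R[i]]_n) : 'rV[R]_(n + n) :=
  row_mx (\row_i complex.Re (u i ord0)) (\row_i complex.Im (u i ord0)).

Lemma embK n (u : 'cV[R[i]]_n) : emb (unemb u) = u.
Proof.
apply/matrixP => i j; rewrite mxE row_mxEl row_mxEr !mxE (ord1 j).
by case: (u i ord0).
Qed.

Lemma emb_lin n a b (x y : 'rV[R]_(n + n)) :
  emb (a *: x + b *: y) = a%:C *: emb x + b%:C *: emb y.
Proof.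
apply/matrixP => i j; rewrite !mxE /=; congr Complex; ring.
Qed.

Lemma conjT_cmb p q (M N : 'M[R[i]]_(p, q)) a b :
  conjT (a%:C *: M + b%:C *: N) = a%:C *: conjT M + b%:C *: conjT N.
Proof.
apply/matrixP => i j; rewrite !mxE rmorphD /= !conjCM //.
Qed.

Lemma tr_cmb p q (M N : 'M[R[i]]_(p, q)) a b :
  (a%:C *: M + b%:C *: N)^T = a%:C *: M^T + b%:C *: N^T.
Proof. by apply/matrixP => i j; rewrite !mxE. Qed.

Lemma Re00_cmb (M N : 'M[R[i]]_1) a b :
  complex.Re ((a%:C *: M + b%:C *: N) 0 0) = a * complex.Re (M 0 0) + b * complex.Re (N 0 0).
Proof. by rewrite !mxE ReD !ReCM. Qed.

Lemma payoff_lin1 n m (A : 'M[R[i]]_(n, m)) (w : 'cV[R[i]]_m) :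
  rlin (fun x : 'rV[R]_(n + n) => payoff A (emb x) w).
Proof.
move=> a b x y; rewrite /payoff emb_lin conjT_cmb.
rewrite !(@mulmxDl R[i]) -!scalemxAl.
by rewrite -?scalemxAl Re00_cmb.
Qed.

Lemma payoff_lin2 n m (A : 'M[R[i]]_(n, m)) (u : 'cV[R[i]]_n) :
  rlin (fun y : 'rV[R]_(m + m) => payoff A u (emb y)).
Proof.
by move=> a b x y; rewrite /payoff emb_lin !mulmxDr -!scalemxAr Re00_cmb.
Qed.

Definition Bq n (G J : 'M[R[i]]_n) (x y : 'rV[R]_(n + n)) : R :=
  (complex.Re ((conjT (emb x) *m G *m emb y) 0 0) +
   complex.Re (((emb x)^T *m J *m emb y) 0 0)) / 2.

Lemma Bq_bil n (G J : 'M[R[i]]_n) : rbil (Bq G J).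
Proof.
split => z a b x y; rewrite /Bq emb_lin.
  rewrite conjT_cmb tr_cmb !(@mulmxDl R[i]) -!scalemxAl !Re00_cmb.
  ring.
rewrite !mulmxDr -!scalemxAr !Re00_cmb; ring.
Qed.

Lemma varformE n (G J : 'M[R[i]]_n) x : varform G J (emb x) = Bq G J x x.
Proof. by []. Qed.

Lemma mu_lin n (mu : 'rV[R[i]]_n) :
  rlin (fun x : 'rV[R]_(n + n) => complex.Re ((mu *m emb x) 0 0)).
Proof. by move=> a b x y; rewrite emb_lin mulmxDr -!scalemxAr Re00_cmb. Qed.

Definition Bn k (x y : 'rV[R]_k) : R := \sum_(j < k) x ord0 j * y ord0 j.

Lemma Bn_bil k : rbil (@Bn k).
Proof.
split => z a b x y; rewrite /Bn !mulr_sumr -big_split /=; apply: eq_bigr => j _;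
  rewrite !mxE; ring.
Qed.

Lemma Bn_ge0 k (x : 'rV[R]_k) : 0 <= Bn x x.
Proof. by apply: sumr_ge0 => j _; rewrite -expr2 sqr_ge0. Qed.

Lemma cnormE n (x : 'rV[R]_(n + n)) : cnorm (emb x) = Num.sqrt (Bn x x).
Proof.
rewrite /cnorm /Bn big_split_ord /= -big_split /=.
by congr Num.sqrt; apply: eq_bigr => i _; rewrite !mxE /= !expr2.
Qed.

Lemma sumE n (x : 'rV[R]_(n + n)) :
  \sum_(i < n) emb x i 0 =
  (\sum_(i < n) x ord0 (lshift n i)) +i* (\sum_(i < n) x ord0 (rshift n i)).
Proof.
apply/eqP; rewrite eq_complex Re_sum Im_sum; apply/andP; split; apply/eqP;
  apply: eq_bigr => i _; rewrite mxE //.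
Qed.

End Concrete.

End Sc_T8.

Section Sc_T9.
Local Open Scope complex_scope.

Section Gen.
Variable R : realType.

Definition Ugen n (al s k c0 : R) (mu : 'rV[R[i]]_n) (G J : 'M[R[i]]_n) :
  set 'rV[R]_(n + n) :=
  [set x | Uset al (emb x) /\
     s * complex.Re ((mu *m emb x) 0 0) + k * Num.sqrt (varform G J (emb x)) + c0 <= 0].

Lemma S1E n al mu (G J : 'M[R[i]]_n) (b k : R) :
  [set x | S1 al mu G J b k (emb x)] = Ugen al 1 k (- b) mu G J.
Proof. by apply/seteqP; split => x /= [h1 h2]; split => //; lra. Qed.

Lemma S2E n al mu (G J : 'M[R[i]]_n) (d k : R) :
  [set x | S2 al mu G J d k (emb x)] = Ugen al (-1) k d mu G J.
Proof. by apply/seteqP; split => x /= [h1 h2]; split => //; lra. Qed.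

Definition cmb k (t : R) (x y : 'rV[R]_k) := (1 - t) *: x + t *: y.

Lemma Ugen_cvx n (al s k c0 : R) mu (G J : 'M[R[i]]_n) :
  0 <= k -> cov_pair G J -> cvx1 (@cmb (n + n)) (Ugen al s k c0 mu G J).
Proof.
move=> k0 [_ [_ hG]] t x y t01 [[hnx [hrx hsx]] hcx] [[hny [hry hsy]] hcy].
have /andP[t0 t1] := t01.
split; [split; [|split]|].
- rewrite /cmb cnormE; apply: le_trans (sqrt_quad_convex _ _ (@Bn_bil _ _) (@Bn_ge0 _ _) t01) _.
  rewrite -!cnormE.
  have : (1 - t) * cnorm (emb x) <= (1 - t) * al by apply: ler_wpM2l => //; lra.
  have : t * cnorm (emb y) <= t * al by apply: ler_wpM2l.
  lra.
- move=> i; have := hrx i; have := hry i; rewrite /cmb !mxE /= => h1 h2.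
  by apply: addr_ge0; apply: mulr_ge0 => //; lra.
- rewrite /cmb emb_lin.
  have -> : \sum_(i < n) ((1 - t)%:C *: emb x + t%:C *: emb y) i 0 =
     (1 - t)%:C * \sum_(i < n) emb x i 0 + t%:C * \sum_(i < n) emb y i 0.
    by rewrite !mulr_sumr -big_split /=; apply: eq_bigr => i _; rewrite !mxE.
  by rewrite hsx hsy !mulr1 /=; congr Complex; ring.
- have hl := @mu_lin R n mu (1 - t) t x y.
  rewrite /cmb hl.
  have hq := @sqrt_quad_convex R _ (Bq G J) t x y (@Bq_bil R n G J) (fun z => hG (emb z)) t01.
  rewrite !varformE in hcx hcy *.
  have hk : k * Num.sqrt (Bq G J ((1 - t) *: x + t *: y) ((1 - t) *: x + t *: y)) <=
     k * ((1 - t) * Num.sqrt (Bq G J x x) + t * Num.sqrt (Bq G J y y)).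
    exact: ler_wpM2l.
  have e1 : s * ((1 - t) * complex.Re ((mu *m emb x) 0 0) + t * complex.Re ((mu *m emb y) 0 0)) +
     k * ((1 - t) * Num.sqrt (Bq G J x x) + t * Num.sqrt (Bq G J y y)) + c0 =
     (1 - t) * (s * complex.Re ((mu *m emb x) 0 0) + k * Num.sqrt (Bq G J x x) + c0) +
     t * (s * complex.Re ((mu *m emb y) 0 0) + k * Num.sqrt (Bq G J y y) + c0) by ring.
  have h1 : (1 - t) * (s * complex.Re ((mu *m emb x) 0 0) + k * Num.sqrt (Bq G J x x) + c0) <= 0.
    by apply: mulr_ge0_le0 => //; lra.
  have h2 : t * (s * complex.Re ((mu *m emb y) 0 0) + k * Num.sqrt (Bq G J y y) + c0) <= 0.
    exact: mulr_ge0_le0.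
  lra.
Qed.

Lemma sqrtquad_cont k (B : 'rV[R]_k -> 'rV[R]_k -> R) : rbil B ->
  continuous (fun x => Num.sqrt (B x x)).
Proof.
move=> hB x; apply: (@continuous_comp _ _ _ (fun x => B x x) (@Num.sqrt R)).
  exact: quad_cont.
exact: sqrt_continuous.
Qed.

Lemma Ugen_closed n (al s k c0 : R) mu (G J : 'M[R[i]]_n) :
  closed (Ugen al s k c0 mu G J).
Proof.
have -> : Ugen al s k c0 mu G J =
  ([set x | cnorm (emb x) <= al] `&`
   ([set x | forall i, 0 <= complex.Re (emb x i 0)] `&`
    [set x | \sum_(i < n) emb x i 0 = 1])) `&`
  [set x | s * complex.Re ((mu *m emb x) 0 0) + k * Num.sqrt (varform G J (emb x)) + c0 <= 0].
  by [].
apply: closedI; [apply: closedI; [|apply: closedI]|].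
- have -> : [set x : 'rV[R]_(n + n) | cnorm (emb x) <= al] =
     [set x | Num.sqrt (Bn x x) <= al].
    by apply/seteqP; split => x /=; rewrite cnormE.
  by apply: closed_leF; apply: sqrtquad_cont; exact: Bn_bil.
- have -> : [set x : 'rV[R]_(n + n) | forall i, 0 <= complex.Re (emb x i 0)] =
     \bigcap_(i in setT) [set x | 0 <= x ord0 (lshift n i)].
    apply/seteqP; split => x /= h i; first by move=> _; have := h i; rewrite mxE.
    by rewrite mxE; apply: h.
  apply: closed_bigI => i _; apply: closed_geF; exact: coord_continuous.
- have -> : [set x : 'rV[R]_(n + n) | \sum_(i < n) emb x i 0 = 1] =
     [set x | \sum_(i < n) x ord0 (lshift n i) = 1] `&`
     [set x | \sum_(i < n) x ord0 (rshift n i) = 0].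
    apply/seteqP; split => x /=; rewrite sumE; first by case.
    by case=> -> ->.
  apply: closedI; apply: closed_eqF; apply: sum_cont => j; exact: coord_continuous.
- apply: closed_leF; apply: contD; last exact: contC.
  apply: contD.
    apply: contM; first exact: contC.
    exact: lin_cont (mu_lin mu).
  apply: contM; first exact: contC.
  exact: (sqrtquad_cont (Bq_bil G J)).
Qed.

Lemma Ugen_compact n (al s k c0 : R) mu (G J : 'M[R[i]]_n) :
  compact (Ugen al s k c0 mu G J).
Proof.
have Mnco : compact [set v : 'rV[R]_(n + n) | forall i, `[(- al), al]%classic (v ord0 i)] :=
  @rV_compact _ (n + n) (fun=> `[(- al), al]%classic)
   (fun=> @segment_compact R (- al) al).
have hcl := @Ugen_closed n al s k c0 mu G J.
apply: (subclosed_compact hcl Mnco).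
move=> x [[hn _] _] j; apply: itv_norm.
rewrite cnormE in hn; apply: le_trans hn.
rewrite -sqrtr_sqr; apply: ler_wsqrtr.
rewrite /Bn (bigD1 j) //= -expr2 lerDl.
by apply: sumr_ge0 => i _; rewrite -expr2 sqr_ge0.
Qed.

End Gen.

End Sc_T9.

Section CoverMath.
Variable R : realType.

Lemma atan_val (s z1 z2 : R) :
  cos (atan s) * z1 - sin (atan s) * z2 =
  (Num.sqrt (1 + s ^+ 2))^-1 * (z1 - s * z2).
Proof.
have c0 : cos (atan s) != 0.
  by apply: lt0r_neq0; apply: cos_gt0_pihalf; rewrite atan_gtNpi2 atan_ltpi2.
have hs : sin (atan s) = s * cos (atan s).
  move: c0; set t := atan s => c0.
  have ht : sin t / cos t = s := atanK s.
  by rewrite -ht divfK.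
by rewrite hs cos_atan; ring.
Qed.

Lemma atan_w (s : R) : 0 < (Num.sqrt (1 + s ^+ 2))^-1 <= 1.
Proof.
have h1 : 1 <= Num.sqrt (1 + s ^+ 2).
  have : Num.sqrt 1 <= Num.sqrt (1 + s ^+ 2) by apply: ler_wsqrtr; rewrite lerDl sqr_ge0.
  by rewrite sqrtr1.
apply/andP; split; first by rewrite invr_gt0; lra.
by rewrite invf_le1 //; lra.
Qed.

Lemma cover_choice (c z1 z2 : R) : 0 < c -> z2 != 0 ->
  exists (a : int) (M : nat),
    `|z1 - (a%:~R / M.+1%:R) * z2| < c.
Proof.
move=> c0 z0.
set M := Num.truncn (`|z2| / c).
have hM : `|z2| / c < M.+1%:R by apply: truncnS_gt.
set Mr : R := M.+1%:R.
have Mr0 : 0 < Mr by rewrite ltr0Sn.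
set q := z1 * Mr / z2.
exists (Num.floor q), M.
have f1 := floor_le q; have f2 := floorD1_gt q.
rewrite intrD in f2.
set a : R := (Num.floor q)%:~R in f1 f2 *.
have e : z1 - a / Mr * z2 = z2 * (q - a) / Mr.
  by rewrite /q; field; rewrite z0 andbT; apply: lt0r_neq0; have := ler0n R M; lra.
rewrite e normrM normfV normrM (gtr0_norm Mr0) (ger0_norm (_ : 0 <= q - a)); last lra.
have hz : `|z2| < c * Mr by rewrite -ltr_pdivrMl // mulrC.
rewrite ltr_pdivrMr //.
have hz0 : 0 <= `|z2| by [].
have : `|z2| * (q - a) <= `|z2| * 1 by apply: ler_wpM2l => //; lra.
lra.
Qed.

End CoverMath.

Section CES.
Variable R : realType.
Variable P : probability (R * R)%type R.
Hypothesis hP : std_CES P.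

Lemma mlin (a b : R) : measurable_fun setT (fun z : R * R => a * z.1 + b * z.2).
Proof.
apply: measurable_realfun.measurable_funD; apply: measurable_realfun.measurable_funM.
- exact: measurable_cst.
- exact: measurable_fst.
- exact: measurable_cst.
- exact: measurable_snd.
Qed.

Lemma mlin_itv (a b : R) (I : interval R) :
  measurable [set z : R * R | a * z.1 + b * z.2 \in I].
Proof.
have := mlin a b measurableT (measurable_itv I).
by rewrite setTI.
Qed.


Lemma mfst_itv (I : interval R) : measurable [set z : R * R | z.1 \in I].
Proof.
have := mlin_itv 1 0 I.
have -> : [set z : R * R | 1 * z.1 + 0 * z.2 \in I] = [set z | z.1 \in I].
  by apply/seteqP; split => z /=; rewrite mul1r mul0r addr0.
by [].
Qed.

Lemma null_strip (c : R) : 0 < c -> P [set z : R * R | z.1 \in `](-c), c[%R] = 0%E -> False.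
Proof.
move=> c0 hN.
set N := [set z : R * R | z.1 \in `](-c), c[%R].
have mN : measurable N := mfst_itv `](-c), c[%R.
pose ang (k : nat) : R :=
  if k is k'.+1 then
    (if @choice.unpickle (int * nat)%type k' is Some p then atan ((p.1)%:~R / (p.2).+1%:R)
     else pi / 2)
  else pi / 2.
pose F k := Defs.rot (ang k) @^-1` N.
have FE : forall k, F k = [set z | cos (ang k) * z.1 + (- sin (ang k)) * z.2 \in `](-c), c[%R].
  by move=> k; apply/seteqP; split => z /=; rewrite /Defs.rot /= mulNr.
have mF : forall k, measurable (F k) by move=> k; rewrite FE; exact: (mlin_itv (cos (ang k)) (- sin (ang k)) `](-c), c[%R).
have PF : forall k, P (F k) = 0%E by move=> k; rewrite /F hP.
have cov : setT `<=` \bigcup_k F k.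
  move=> z _; case: (eqVneq z.2 0) => [z20|z20].
    exists 0%N => //; rewrite /F /N /ang /= /Defs.rot /= cos_pihalf sin_pihalf z20.
    rewrite mul0r mulr0 subr0 in_itv /=; apply/andP; split; lra.
  have [a [M h]] := cover_choice z.1 c0 z20.
  exists (choice.pickle (a, M)).+1 => //; rewrite /F /N /ang /= choice.pickleK /= /Defs.rot /= atan_val.
  set w := (Num.sqrt _)^-1; set dd := z.1 - _ * z.2.
  have /andP[w0 w1] : 0 < w <= 1 by apply: atan_w.
  have : `|w * dd| < c.
    rewrite normrM (gtr0_norm w0); apply: le_lt_trans h.
    by rewrite -[X in _ <= X]mul1r ler_wpM2r.
  by rewrite ltr_norml in_itv /=.
have := @measure_sigma_subadditive _ _ _ P setT F mF measurableT cov.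
have -> : (\sum_(0 <= i <oo) P (F i))%E = 0%E.
  by rewrite (eq_eseriesr (fun k _ => PF k)) eseries0.
move=> h; have h2 : (1 <= 0 :> \bar R)%E.
  by apply: (le_trans _ h); rewrite -(probability_setT P); exact: lexx.
by move: h2; rewrite leNgt lte01.
Qed.


Lemma cdf_lt_half (x : R) : x < 0 -> ces_cdf P x < 2^-1.
Proof.
move=> x0; pose c := - x.
have hc : c = - x by [].
have c0 : 0 < c by lra.
set E1 := [set z : R * R | z.1 \in `]-oo, x]%R].
set E2 := [set z : R * R | z.1 \in `[c, +oo[%R].
set N := [set z : R * R | z.1 \in `](-c), c[%R].
have m1 : measurable E1 := mfst_itv _.
have m2 : measurable E2 := mfst_itv _.
have mN : measurable N := mfst_itv _.
have eC : [set z : R * R | z.1 <= x] = E1.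
  by apply/seteqP; split => z; rewrite /E1 /= in_itv /=.
have eR : Defs.rot pi @^-1` E1 = E2.
  apply/seteqP; split => z; rewrite /E1 /E2 /Defs.rot /= cospi sinpi !in_itv /= ?andbT => h;
  lra.
have P12 : P E2 = P E1 by rewrite -eR hP.
have d12 : E1 `&` E2 = set0.
  apply/seteqP; split => z // [] ; rewrite /E1 /E2 /= !in_itv /= ?andbT => h1 h2.
  by lra.
have d3 : (E1 `|` E2) `&` N = set0.
  apply/seteqP; split => z // [] ; rewrite /E1 /E2 /N /= !in_itv /= ?andbT.
  by move=> [h1|h1] /andP[h2 h3]; lra.
have eT : (E1 `|` E2) `|` N = setT.
  apply/seteqP; split => z // _; rewrite /E1 /E2 /N /= !in_itv /= ?andbT.
  have [h|h] := lerP z.1 x; first by left; left.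
  have [h'|h'] := lerP c z.1; first by left; right.
  by right; apply/andP; split; lra.
have hT : P ((E1 `|` E2) `|` N) = (P E1 + P E2 + P N)%E.
  by rewrite (measureU P (measurableU E1 E2 m1 m2) mN d3) (measureU P m1 m2 d12).
have hT1 : P ((E1 `|` E2) `|` N) = 1%E.
  by rewrite eT; exact: probability_setT.
have f1 : P E1 \is a fin_num := fin_num_measure P E1 m1.
have fN : P N \is a fin_num := fin_num_measure P N mN.
set a := fine (P E1); set e := fine (P N).
have e0 : 0 <= e by apply: fine_ge0; exact: measure_ge0.
have h1 : 1 = a + a + e.
  have : (1%:E : \bar R) = (a + a + e)%:E.
    by rewrite -hT1 hT P12 -(fineK f1) -(fineK fN).
  by case.
rewrite /ces_cdf eC -/a.
rewrite ltNge; apply/negP => ha.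
have ee : e = 0 by lra.
apply: (@null_strip c c0).
by rewrite -(fineK fN) -/e ee.
Qed.

End CES.

Lemma k_case_ge0 (R : realType) (p k : R) : k_case p k -> 0 <= k.
Proof.
case=> [P hP /andP[p1 p2] -> | _ -> | _ -> | z1 z2 _ _ _ ->].
- rewrite /ces_quantile.
  case: (pselect ([set x | p <= ces_cdf P x] !=set0)) => [ne|e0].
    apply: lb_le_inf ne _ => x hx; rewrite leNgt; apply/negP => xlt.
    have := cdf_lt_half hP xlt; move: hx => /=; lra.
  have -> : [set x | p <= ces_cdf P x] = set0.
    by apply/seteqP; split => // x hx; apply: e0; exists x.
  by rewrite inf0.
- exact: sqrtr_ge0.
- exact: sqrtr_ge0.
- by apply: addr_ge0; [apply: mulr_ge0|]; apply: sqrtr_ge0.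
Qed.


Theorem theorem10 (R : realType) (n m : nat) (A : 'M[R[i]]_(n, m))
  (alpha1 alpha2 : R) (muB : 'rV[R[i]]_n) (b : R) (muD : 'rV[R[i]]_m) (d : R)
  (GB JB : 'M[R[i]]_n) (GD JD : 'M[R[i]]_m) (p1 p2 k1 k2 : R) :
  1 / Num.sqrt (n%:R) <= alpha1 ->
  1 / Num.sqrt (m%:R) <= alpha2 ->
  cov_pair GB JB -> cov_pair GD JD ->
  k_case p1 k1 -> k_case p2 k2 ->
  (exists u, S1_strict alpha1 muB GB JB b k1 u) ->
  (exists v, S2_strict alpha2 muD GD JD d k2 v) ->
  exists (us : 'cV[R[i]]_n) (vs : 'cV[R[i]]_m),
    [/\ S1 alpha1 muB GB JB b k1 us, S2 alpha2 muD GD JD d k2 vs &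
        forall u v, S1 alpha1 muB GB JB b k1 u -> S2 alpha2 muD GD JD d k2 v ->
          payoff A u vs <= payoff A us vs <= payoff A us v].
Proof.
move=> _ _ covB covD kc1 kc2 [u0 hu0] [v0 hv0].
have k10 := k_case_ge0 kc1; have k20 := k_case_ge0 kc2.
pose X := Ugen alpha1 1 k1 (- b) muB GB JB.
pose Y := Ugen alpha2 (-1) k2 d muD GD JD.
have eX : X = [set x | S1 alpha1 muB GB JB b k1 (emb x)] by rewrite S1E.
have eY : Y = [set y | S2 alpha2 muD GD JD d k2 (emb y)] by rewrite S2E.
have X0 : X (unemb u0).
  rewrite eX /= embK; case: hu0 => hn hr hs hc.
  split; [split; [exact: ltW|split => // i; exact: ltW]|exact: ltW].
have Y0 : Y (unemb v0).
  rewrite eY /= embK; case: hv0 => hn hr hs hc.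
  split; [split; [exact: ltW|split => // i; exact: ltW]|exact: ltW].
pose f := fun (x : 'rV[R]_(n + n)) (y : 'rV[R]_(m + m)) => payoff A (emb x) (emb y).
have aff1 : forall t x x' y, f (cmb t x x') y = (1 - t) * f x y + t * f x' y.
  by move=> t x x' y; exact: (payoff_lin1 A (emb y) (1 - t) t x x').
have aff2 : forall t x y y', f x (cmb t y y') = (1 - t) * f x y + t * f x y'.
  by move=> t x y y'; exact: (payoff_lin2 A (emb x) (1 - t) t y y').
have clx : forall y r, closed [set x | r <= f x y].
  by move=> y r; apply: closed_geF; exact: lin_cont (payoff_lin1 A (emb y)).
have cly : forall x r, closed [set y | f x y <= r].
  by move=> x r; apply: closed_leF; exact: lin_cont (payoff_lin2 A (emb x)).
have [xs [ys [Xxs Yys H]]] := @saddle R _ _ (@cmb R (n + n)) (@cmb R (m + m)) f aff1 aff2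
  X Y _ _ X0 Y0 (@Ugen_compact R n alpha1 1 k1 (-b) muB GB JB)
  (@Ugen_compact R m alpha2 (-1) k2 d muD GD JD)
  (@Ugen_cvx R n alpha1 1 k1 (-b) muB GB JB k10 covB)
  (@Ugen_cvx R m alpha2 (-1) k2 d muD GD JD k20 covD) clx cly.
exists (emb xs), (emb ys); split.
- by move: Xxs; rewrite eX.
- by move: Yys; rewrite eY.
move=> u v hu hv.
have hXu : X (unemb u) by rewrite eX /= embK.
have hYv : Y (unemb v) by rewrite eY /= embK.
by have := H _ _ hXu hYv; rewrite /f !embK.
Qed.
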